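(* Let $\lambda$ be a singular cardinal and let $\langle\lambda_i\mid i<\mathrm{cf}(\lambda)\rangle$ be a strictly increasing sequence of regular cardinals cofinal in $\lambda$. Let $\langle f_\alpha\mid\alpha<\lambda^+\rangle$ be a sequence of functions in $\prod_{i<\mathrm{cf}(\lambda)}\lambda_i$ that is unbounded with respect to $<^*$ and satisfies $f_\alpha<^*f_\beta$ for all $\alpha<\beta<\lambda^+$. Then for every $Z\subseteq\lambda^+$ with $|Z|=\lambda^+$, the set $$I_Z:=\{i<\mathrm{cf}(\lambda)\mid \sup\{\epsilon<\lambda_i\mid \sup\{\beta\in Z\mid f_\beta(i)=\epsilon\}=\lambda^+\}=\lambda_i\}$$ is cofinal in $\mathrm{cf}(\lambda)$.
   Context: For $f,g\in\prod_{i<\mathrm{cf}(\lambda)}\lambda_i$, $f<^*g$ means that the set $\{i<\mathrm{cf}(\lambda)\mid f(i)\ge g(i)\}$ is bounded in $\mathrm{cf}(\lambda)$. A family is unbounded with respect to $<^*$ if there is no single $g\in\prod_{i<\mathrm{cf}(\lambda)}\lambda_i$ with $f<^*g$ for all $f$ in the family. *)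

(* Defs.v *)
(* Ordinals are modelled as elements of an arbitrary
   (sufficiently large) well-ordered type (O, lt); every initial segment of a
   well-order is isomorphic to a unique von Neumann ordinal, so ordinal and
   cardinal notions below are the usual ones, read inside O. *)
From Stdlib Require Import Classical.

Section OrdinalNotions.
Variable O : Type.
Variable lt : O -> O -> Prop.

Definition le (x y : O) : Prop := lt x y \/ x = y.

Definition is_well_order : Prop :=
  well_founded lt /\
  (forall x y z, lt x y -> lt y z -> lt x z) /\
  (forall x y, lt x y \/ x = y \/ lt y x).

Definition below (a : O) : O -> Prop := fun x => lt x a.

Definition equipotent (A B : O -> Prop) : Prop :=
  exists g : O -> O,
    (forall x, A x -> B (g x)) /\
    (forall x y, A x -> A y -> g x = g y -> x = y) /\
    (forall y, B y -> exists x, A x /\ g x = y).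

Definition card_le (A B : O -> Prop) : Prop :=
  exists g : O -> O,
    (forall x, A x -> B (g x)) /\
    (forall x y, A x -> A y -> g x = g y -> x = y).

Definition is_cardinal (a : O) : Prop :=
  forall b, lt b a -> ~ equipotent (below b) (below a).

Definition is_limit (a : O) : Prop :=
  (exists x, lt x a) /\ (forall x, lt x a -> exists y, lt x y /\ lt y a).

Definition infinite_cardinal (a : O) : Prop := is_cardinal a /\ is_limit a.

Definition cofinal_in (X : O -> Prop) (a : O) : Prop :=
  (forall x, X x -> lt x a) /\ (forall b, lt b a -> exists x, X x /\ le b x).

Definition is_cf (a k : O) : Prop :=
  is_cardinal k /\
  (exists X, cofinal_in X a /\ equipotent X (below k)) /\
  (forall X, cofinal_in X a -> card_le (below k) X).

Definition regular_cardinal (a : O) : Prop := infinite_cardinal a /\ is_cf a a.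

Definition singular_cardinal (a : O) : Prop :=
  infinite_cardinal a /\ exists k, is_cf a k /\ lt k a.

Definition is_succ_cardinal (a m : O) : Prop :=
  is_cardinal m /\ lt a m /\ (forall n, is_cardinal n -> lt a n -> le m n).

Definition is_sup (S : O -> Prop) (s : O) : Prop :=
  (forall x, S x -> le x s) /\ (forall t, (forall x, S x -> le x t) -> le s t).

Definition lt_star (k : O) (f g : O -> O) : Prop :=
  exists j, lt j k /\ (forall i, lt i k -> le (g i) (f i) -> lt i j).

Definition in_prod (k : O) (ls : O -> O) (g : O -> O) : Prop :=
  forall i, lt i k -> lt (g i) (ls i).

End OrdinalNotions.

(* Main.v *)
Require Import Defs.
From Stdlib Require Import Classical IndefiniteDescription ClassicalEpsilon.

Lemma choose_fun (X Y : Type) (P : X -> Y -> Prop) :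
  (forall x, exists y, P x y) -> exists F : X -> Y, forall x, P x (F x).
Proof.
  intro H. exists (fun x => proj1_sig (constructive_indefinite_description _ (H x))).
  intro x. exact (proj2_sig (constructive_indefinite_description _ (H x))).
Qed.

Section S.
Context (O : Type) (lt : O -> O -> Prop).

Lemma card_le_trans A B C : card_le O A B -> card_le O B C -> card_le O A C.
Proof.
  intros [g [H1 H2]] [h [K1 K2]]. exists (fun x => h (g x)). split.
  - intros x Ax. apply K1. apply H1. exact Ax.
  - intros x y Ax Ay E. apply H2; auto.
Qed.

Lemma equip_sym A B : equipotent O A B -> equipotent O B A.
Proof.
  intros [g [H1 [H2 H3]]].
  destruct (choose_fun O O (fun y x => B y -> A x /\ g x = y)) as [h Hh].
  { intro y. destruct (classic (B y)) as [By|nB].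
    - destruct (H3 y By) as [x Hx]. exists x. auto.
    - exists y. intro; contradiction. }
  exists h. split; [|split].
  - intros y By. apply (Hh y By).
  - intros y1 y2 B1 B2 E. destruct (Hh y1 B1) as [_ E1]. destruct (Hh y2 B2) as [_ E2].
    rewrite <- E1, <- E2, E. reflexivity.
  - intros x Ax. exists (g x). split. apply H1; auto.
    destruct (Hh (g x) (H1 x Ax)) as [A' E]. apply H2; auto.
Qed.

Lemma equip_card_le A B : equipotent O A B -> card_le O A B.
Proof. intros [g [H1 [H2 _]]]. exists g. auto. Qed.

Fixpoint it (e : O -> O) (n : nat) (x : O) : O :=
  match n with 0 => x | S n => e (it e n x) end.

Lemma csb_sub A B : (forall x, B x -> A x) -> card_le O A B -> equipotent O A B.
Proof.
  intros BA [e [He1 He2]].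
  set (C := fun x => exists n z, A z /\ ~ B z /\ x = it e n z).
  assert (CA : forall x, C x -> A x).
  { intros x [n [z [Az [_ ->]]]]. induction n; simpl; auto. }
  assert (Ce : forall x, C x -> C (e x)).
  { intros x [n [z [Az [nB ->]]]]. exists (S n), z. auto. }
  exists (fun x => if excluded_middle_informative (C x) then e x else x).
  split; [|split].
  - intros x Ax. destruct (excluded_middle_informative (C x)) as [Cx|nC]; auto.
    apply NNPP. intro nB. apply nC. exists 0, x. auto.
  - intros x y Ax Ay.
    destruct (excluded_middle_informative (C x)) as [Cx|nCx];
    destruct (excluded_middle_informative (C y)) as [Cy|nCy]; intro E; auto.
    + exfalso. apply nCy. rewrite <- E. auto.
    + exfalso. apply nCx. rewrite E. auto.
  - intros y By. destruct (classic (C y)) as [Cy|nCy].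
    + destruct Cy as [n [z [Az [nB Ey]]]]. destruct n as [|n].
      * simpl in Ey. subst. contradiction.
      * exists (it e n z). assert (Cx : C (it e n z)) by (exists n, z; auto).
        split. apply CA; auto.
        destruct (excluded_middle_informative (C (it e n z))); [|contradiction].
        rewrite Ey. reflexivity.
    + exists y. split; auto. destruct (excluded_middle_informative (C y)); [contradiction|auto].
Qed.

Context (Hwo : is_well_order O lt).

Lemma irr x : ~ lt x x.
Proof.
  destruct Hwo as [Hwf _]. induction (Hwf x) as [x _ IH]. intro H. exact (IH x H H).
Qed.

Lemma ltr x y z : lt x y -> lt y z -> lt x z.
Proof. destruct Hwo as [_ [T _]]. apply T. Qed.

Lemma tri x y : lt x y \/ x = y \/ lt y x.
Proof. destruct Hwo as [_ [_ T]]. apply T. Qed.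

Lemma not_lt_le x y : ~ lt x y -> le O lt y x.
Proof. intro H. destruct (tri x y) as [h|[h|h]]; [contradiction| right; auto | left; auto]. Qed.

Lemma le_lt x y z : le O lt x y -> lt y z -> lt x z.
Proof. intros [h|<-] h2; auto. eapply ltr; eauto. Qed.

Lemma lt_le x y z : lt x y -> le O lt y z -> lt x z.
Proof. intros h [h2| <-]; auto. eapply ltr; eauto. Qed.

Lemma le_lt_false x y : le O lt x y -> lt y x -> False.
Proof. intros h h2. apply (irr x). eapply le_lt; eauto. Qed.

Lemma no_inj_down a m : is_cardinal O lt a -> lt m a ->
  card_le O (below O lt a) (below O lt m) -> False.
Proof.
  intros Ca Hm Hc. apply (Ca m Hm). apply equip_sym. apply csb_sub; auto.
  intros x Hx. unfold below in *. eapply ltr; eauto.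
Qed.

Lemma reg_bound a m (h : O -> O) : is_cardinal O lt a -> is_cf O lt a a -> lt m a ->
  (forall x, lt x m -> lt (h x) a) -> exists s, lt s a /\ forall x, lt x m -> lt (h x) s.
Proof.
  intros Ca [_ [_ Cf]] Hm Hh. apply NNPP. intro Hn.
  set (T := fun y => exists x, lt x m /\ h x = y).
  assert (cofinal_in O lt T a).
  { split. intros y [x [Hx <-]]. auto.
    intros b Hb. apply NNPP. intro Hn2. apply Hn. exists b. split; auto.
    intros x Hx. apply NNPP. intro nl. apply Hn2. exists (h x). split.
    exists x; auto. apply not_lt_le; auto. }
  apply (no_inj_down a m Ca Hm). eapply card_le_trans. apply Cf; eauto.
  destruct (choose_fun O O (fun y x => T y -> lt x m /\ h x = y)) as [p Hp].
  { intro y. destruct (classic (T y)) as [[x Hx]|nT]. exists x; auto. exists y; tauto. }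
  exists p. split. intros y Ty. apply (Hp y Ty).
  intros y1 y2 T1 T2 E. destruct (Hp y1 T1) as [_ E1]. destruct (Hp y2 T2) as [_ E2].
  rewrite <- E1, <- E2, E. auto.
Qed.

Lemma reg_bound2 a m (n : O -> O) (h : O -> O -> O) :
  is_cardinal O lt a -> is_cf O lt a a -> lt m a ->
  (forall x, lt x m -> lt (n x) a) ->
  (forall x y, lt x m -> lt y (n x) -> lt (h x y) a) ->
  exists s, lt s a /\ forall x y, lt x m -> lt y (n x) -> lt (h x y) s.
Proof.
  intros Ca Cf Hm Hn Hh.
  destruct (choose_fun O O (fun x s => lt x m -> lt s a /\ forall y, lt y (n x) -> lt (h x y) s)) as [S HS].
  { intro x. destruct (classic (lt x m)) as [Hx|nx].
    - destruct (reg_bound a (n x) (h x) Ca Cf (Hn x Hx) (fun y => Hh x y Hx)) as [s Hs]. exists s; auto.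
    - exists x; tauto. }
  destruct (reg_bound a m S Ca Cf Hm) as [s [Hs1 Hs2]].
  { intros x Hx. apply (HS x Hx). }
  exists s. split; auto. intros x y Hx Hy. eapply ltr. apply (HS x Hx); auto. auto.
Qed.

End S.


Theorem mainTheorem5
  (O : Type) (lt : O -> O -> Prop) (Hwo : is_well_order O lt)
  (lam kappa lamp : O) (ls : O -> O) (f : O -> O -> O)
  (Hsing : singular_cardinal O lt lam)
  (Hcf : is_cf O lt lam kappa)
  (Hsucc : is_succ_cardinal O lt lam lamp)
  (Hls_reg : forall i, lt i kappa -> regular_cardinal O lt (ls i))
  (Hls_inc : forall i j, lt i kappa -> lt j kappa -> lt i j -> lt (ls i) (ls j))
  (Hls_cof : cofinal_in O lt (fun x => exists i, lt i kappa /\ x = ls i) lam)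
  (Hf_prod : forall a, lt a lamp -> in_prod O lt kappa ls (f a))
  (Hf_inc : forall a b, lt a lamp -> lt b lamp -> lt a b ->
              lt_star O lt kappa (f a) (f b))
  (Hf_unb : ~ exists g, in_prod O lt kappa ls g /\
              forall a, lt a lamp -> lt_star O lt kappa (f a) g) :
  forall Z : O -> Prop,
    (forall b, Z b -> lt b lamp) ->
    equipotent O Z (below O lt lamp) ->
    cofinal_in O lt
      (fun i => lt i kappa /\
         is_sup O lt
           (fun e => lt e (ls i) /\
              is_sup O lt (fun b => Z b /\ f b i = e) lamp)
           (ls i))
      kappa.
Proof.
  intros Z HZ HZeq.
  pose proof (ltr O lt Hwo) as Tr.
  pose proof (tri O lt Hwo) as Tri.
  pose proof (irr O lt Hwo) as Irr.
  pose proof (not_lt_le O lt Hwo) as NL.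
  pose proof (le_lt O lt Hwo) as LeLt.
  pose proof (lt_le O lt Hwo) as LtLe.
  pose proof (le_lt_false O lt Hwo) as LLF.
  assert (LeT : forall x y z, le O lt x y -> le O lt y z -> le O lt x z).
  { intros x y z [h| <-] [h2| <-]; try (left; eapply Tr; eauto; fail); try (left; auto; fail); right; auto. }
  destruct Hsing as [[Clam [Lne Llim]] [k [Hcfk Hk]]].
  destruct Hsucc as [Clamp [Hlamlamp _]].
  destruct Hcf as [Ckap [_ Hkmin]].
  assert (Hklam : lt kappa lam).
  { destruct Hcfk as [_ [[X [HX1 HX2]] _]].
    destruct (Tri k kappa) as [h|[h|h]].
    - exfalso. apply (no_inj_down O lt Hwo kappa k Ckap h).
      eapply card_le_trans. apply (Hkmin X HX1). apply equip_card_le; exact HX2.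
    - subst; auto.
    - eapply Tr; eauto. }
  assert (Hkmax : forall x, lt x kappa -> exists y, lt x y /\ lt y kappa).
  { intros x Hx. apply NNPP. intro Hn.
    destruct Hls_cof as [C1 C2].
    assert (lt (ls x) lam) by (apply C1; eauto).
    destruct (Llim _ H) as [y [Hy1 Hy2]].
    destruct (C2 y Hy2) as [z [[i [Hi ->]] Hyi]].
    destruct (Tri x i) as [h|[h|h]].
    - apply Hn; eauto.
    - subst. eapply LLF; eauto.
    - apply (Irr y). eapply LeLt. exact Hyi. apply (Tr _ (ls x)); [apply Hls_inc; auto | exact Hy1]. }
  assert (LSt : forall g h l, lt_star O lt kappa g h -> lt_star O lt kappa h l ->
             lt_star O lt kappa g l).
  { intros g h l [j1 [Hj1 P1]] [j2 [Hj2 P2]].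
    destruct (Tri j1 j2) as [c|[c|c]];
    [exists j2 | exists j2 | exists j1]; split; auto;
    intros i Hi Hle; apply NNPP; intro ni;
    (assert (A1 : ~ lt i j1) by (intro; apply ni; try subst; eauto));
    (assert (A2 : ~ lt i j2) by (intro; apply ni; try subst; eauto));
    (assert (B1 : lt (g i) (h i)) by (apply NNPP; intro; apply A1; apply P1; auto; apply NL; auto));
    (assert (B2 : lt (h i) (l i)) by (apply NNPP; intro; apply A2; apply P2; auto; apply NL; auto));
    eapply LLF; eauto. }
  assert (LSf : forall a y G, lt y lamp -> le O lt a y ->
             lt_star O lt kappa (f y) G -> lt_star O lt kappa (f a) G).
  { intros a y G Hy [h| <-] H; auto. apply (LSt _ (f y) _); [apply Hf_inc; [eapply Tr; eauto | auto | auto] | exact H]. }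
  assert (Zunb : forall c, lt c lamp -> exists b, Z b /\ le O lt c b).
  { intros c Hc. apply NNPP. intro Hn.
    apply (no_inj_down O lt Hwo lamp c Clamp Hc).
    eapply card_le_trans. apply equip_card_le. apply equip_sym. exact HZeq.
    exists (fun x => x). split; auto.
    intros x Zx. unfold below. apply NNPP. intro nl. apply Hn. exists x. split; auto. }
  split. { intros x [H _]; exact H. }
  intros b Hb. apply NNPP; intro Hno.
  assert (Hlimi : forall i, lt i kappa -> exists x, lt x (ls i)).
  { intros i Hi. destruct (Hls_reg i Hi) as [[_ [L _]] _]. exact L. }
  destruct (choose_fun O O (fun i gi => lt i kappa -> lt gi (ls i) /\
     (le O lt b i -> forall e, le O lt gi e -> lt e (ls i) ->
        ~ is_sup O lt (fun x => Z x /\ f x i = e) lamp))) as [g Hg].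
  { intro i. destruct (classic (lt i kappa)) as [Hi|ni]; [|exists i; tauto].
    destruct (classic (le O lt b i)) as [Hbi|nbi].
    - assert (Hns : ~ is_sup O lt (fun e => lt e (ls i) /\
              is_sup O lt (fun x => Z x /\ f x i = e) lamp) (ls i)).
      { intro Hs. apply Hno. exists i. auto. }
      assert (exists t, lt t (ls i) /\ forall e, lt e (ls i) ->
                is_sup O lt (fun x => Z x /\ f x i = e) lamp -> le O lt e t) as [t [Ht1 Ht2]].
      { apply NNPP. intro Hn. apply Hns. split.
        - intros x [Hx _]. left; auto.
        - intros t Ht. apply NNPP. intro nl. apply Hn. exists t. split.
          + destruct (Tri t (ls i)) as [h|[h|h]]; auto.
            * exfalso; apply nl; right; auto.
            * exfalso; apply nl; left; auto.
          + intros e He1 He2. apply Ht. auto. }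
      destruct (Hls_reg i Hi) as [[_ [_ L]] _].
      destruct (L t Ht1) as [gi [G1 G2]]. exists gi. intros _. split; auto.
      intros _ e He1 He2 Hs. apply (Irr e). eapply LeLt. apply (Ht2 e He2 Hs).
      eapply LtLe; eauto.
    - destruct (Hlimi i Hi) as [x Hx]. exists x. intros _. split; auto. }
  set (Q := fun i e => lt i kappa /\ le O lt b i /\ le O lt (g i) e /\ lt e (ls i)).
  destruct (choose_fun O (O -> O) (fun i C => forall e, lt (C e) lamp /\
      (Q i e -> forall x, Z x -> f x i = e -> le O lt x (C e)))) as [c Hc].
  { intro i. apply (choose_fun O O (fun e y => lt y lamp /\ (Q i e -> forall x, Z x -> f x i = e -> le O lt x y))). intro e.
    destruct (classic (Q i e)) as [[Hi [Hbi [Hge Hel]]]|nQ]; [|exists lam; tauto].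
    destruct (Hg i Hi) as [_ Hg2].
    pose proof (Hg2 Hbi e Hge Hel) as Hns.
    assert (exists t, lt t lamp /\ forall x, Z x -> f x i = e -> le O lt x t) as [t [Ht1 Ht2]].
    { apply NNPP. intro Hn. apply Hns. split.
      - intros x [Zx _]. left; auto.
      - intros t Ht. apply NNPP. intro nl. apply Hn. exists t. split.
        + destruct (Tri t lamp) as [h|[h|h]]; auto.
          * exfalso; apply nl; right; auto.
          * exfalso; apply nl; left; auto.
        + intros x Zx Ex. apply Ht. auto. }
    exists t. split; auto. }
  assert (Hd : exists d, lt d lamp /\ forall i e, Q i e -> lt (c i e) d).
  { apply NNPP. intro Hn.
    destruct Hls_cof as [_ C2].
    destruct (C2 kappa Hklam) as [z [[i0 [Hi0 ->]] Hki0]].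
    destruct (choose_fun O O (fun i Gi => lt i kappa -> lt Gi (ls i) /\
       (lt i0 i -> forall k e, lt k i -> lt e (ls k) -> lt (f (c k e) i) Gi))) as [G HG].
    { intro i. destruct (classic (lt i kappa)) as [Hi|ni]; [|exists i; tauto].
      destruct (classic (lt i0 i)) as [Hi0i|ni0].
      - destruct (Hls_reg i Hi) as [[Ci _] Cfi].
        assert (Hik : lt i (ls i)).
        { eapply Tr. exact Hi. eapply LeLt. exact Hki0. apply Hls_inc; auto. }
        destruct (reg_bound2 O lt Hwo (ls i) i ls (fun k e => f (c k e) i) Ci Cfi Hik)
          as [s [Hs1 Hs2]].
        + intros x Hx. apply Hls_inc; eauto.
        + intros x y Hx Hy. apply Hf_prod. apply (Hc x y). auto.
        + exists s. intros _. split; auto.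
      - destruct (Hlimi i Hi) as [x Hx]. exists x. tauto. }
    apply Hf_unb. exists G. split.
    { intros i Hi. apply (HG i Hi). }
    intros a Ha.
    assert (exists i e, Q i e /\ le O lt a (c i e)) as [i [e [HQ Hae]]].
    { apply NNPP. intro Hn2. apply Hn. exists a. split; auto.
      intros i e HQ. apply NNPP. intro nl. apply Hn2. exists i, e. split; auto. }
    apply (LSf a (c i e) G (proj1 (Hc i e)) Hae).
    destruct HQ as [Hi [Hbi [Hge Hel]]].
    assert (exists m, lt m kappa /\ le O lt i m /\ le O lt i0 m) as [m [Hm1 [Hm2 Hm3]]].
    { destruct (Tri i i0) as [h|[h|h]].
      - exists i0. split; auto. split; [left; auto | right; auto].
      - exists i0. subst. split; [auto | split; right; auto].
      - exists i. split; auto. split; [right; auto| left; auto]. }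
    destruct (Hkmax m Hm1) as [j [Hj1 Hj2]].
    exists j. split; auto. intros i' Hi' Hle. apply NNPP. intro ni.
    assert (Hji : le O lt j i') by (apply NL; auto).
    destruct (HG i' Hi') as [_ HG2].
    assert (lt (f (c i e) i') (G i')).
    { apply HG2. eapply LeLt. exact Hm3. eapply LtLe; eauto.
      eapply LeLt. exact Hm2. eapply LtLe; eauto. auto. }
    eapply LLF; eauto. }
  destruct Hd as [d [Hd1 Hd2]].
  apply Hf_unb. exists g. split.
  { intros i Hi. apply (Hg i Hi). }
  intros a Ha.
  assert (exists m, lt m lamp /\ le O lt a m /\ le O lt d m) as [m [Hm1 [Hm2 Hm3]]].
  { destruct (Tri a d) as [h|[h|h]].
    - exists d. split; auto. split; [left; auto | right; auto].
    - exists d. subst. split; [auto | split; right; auto].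
    - exists a. split; auto. split; [right; auto| left; auto]. }
  destruct (Zunb m Hm1) as [be [Zb Hmb]].
  assert (Hbl : lt be lamp) by auto.
  apply (LSf a be g Hbl). { eapply LeT; eauto. }
  exists b. split; auto. intros i Hi Hle. apply NNPP. intro ni.
  assert (HQ : Q i (f be i)).
  { split; auto. split. apply NL; auto. split; auto. apply Hf_prod; auto. }
  pose proof (proj2 (Hc i (f be i)) HQ be Zb eq_refl) as H1.
  pose proof (Hd2 i (f be i) HQ) as H2.
  apply (Irr be). eapply LeLt. exact H1. eapply LtLe. exact H2. eapply LeT; eauto.
Qed.
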